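(* Let $\Lambda\Subset\mathbb X$ and $x\in\mathbb X$. Then \[ \sum_{N\subset\Lambda}|\gamma(x,N)|\,\alpha^N=(1+\alpha(x)\mathbf 1_\Lambda(x))\sum_{N\subset\Lambda\setminus\{x\}}|\gamma(x,N)|\,\alpha^N, \] and \[ \sum_{N\subset\Lambda\setminus\{x\}}|\gamma(x,N)|\,\alpha^N\le\prod_{\substack{X\in\mathbf F(x):\\ X\setminus\{x\}\subset\Lambda}}\max\Big\{|W(X)|,\ 1+|W(X)-1|\alpha^S\ \Big|\ \varnothing\neq S\subset X\setminus\{x\}\Big\}. \]
   Context: $\mathbb X$ is a finite or countably infinite set, $X\Subset\mathbb X$ means finite subset, $\mathbf F$ is the set of finite subsets, $\mathbf F(x)=\{X\Subset\mathbb X\mid x\in X\}$. Fix $W:\mathbf F\to\mathbb C$, $r:\mathbb X\to[0,1)$, $\alpha=\frac r{1-r}$, $\alpha^S=\prod_{s\in S}\alpha(s)$. Conditional interaction: $W(X\mid B)=\prod_{C\subset B}W(X\cup C)$ if $X\cap B=\varnothing$, $0$ if $X=\{y\}$ with $y\in B$, $1$ otherwise; $\kappa(X\mid B)=\prod_{\varnothing\neq S\subset X}W(S\mid B)$ and $\kappa(x\mid B)=\kappa(\{x\}\mid B)$. Kernel: $\gamma(x,N)=\gamma(x,N\mid\varnothing)$ where $\gamma(x,N\mid B)=\sum_{M\subset N}(-1)^{|N\setminus M|}\kappa(x\mid B\cup M)$. A maximum $\max\{a,\ b_S\mid S\in\mathcal S\}$ denotes the maximum of $a$ and all $b_S$ (equal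 to $a$ if $\mathcal S=\varnothing$). *)

(* Defs.v *)
From HB Require Import structures.
From mathcomp Require Import all_boot all_order all_algebra.
From mathcomp Require Import finmap.
From mathcomp Require Import complex.
From mathcomp Require Import reals.
Set Implicit Arguments. Unset Strict Implicit. Unset Printing Implicit Defensive.
Import Order.TTheory GRing.Theory Num.Theory.
Local Open Scope ring_scope.
Local Open Scope fset_scope.

Definition cmod (R : rcfType) (z : R[i]) : R := ComplexField.Normc.normc z.

Definition alpha (R : realType) (T : countType) (r : T -> R) (s : T) : R :=
  r s / (1 - r s).

Definition alphaS (R : realType) (T : countType) (r : T -> R) (S : {fset T}) : R :=
  \prod_(s <- S) alpha r s.

Definition condW (R : realType) (T : countType) (W : {fset T} -> R[i])
    (X B : {fset T}) : R[i] :=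
  if X `&` B == fset0 then \prod_(C <- fpowerset B) W (X `|` C)
  else if has (fun y => X == [fset y]) B then 0 else 1.

Definition kappa (R : realType) (T : countType) (W : {fset T} -> R[i])
    (X B : {fset T}) : R[i] :=
  \prod_(S <- fpowerset X | S != fset0) condW W S B.

Definition gammaB (R : realType) (T : countType) (W : {fset T} -> R[i])
    (x : T) (N B : {fset T}) : R[i] :=
  \sum_(M <- fpowerset N) (-1) ^+ #|` N `\` M| * kappa W [fset x] (B `|` M).

Definition gamma (R : realType) (T : countType) (W : {fset T} -> R[i])
    (x : T) (N : {fset T}) : R[i] := gammaB W x N fset0.

(* Main.v *)
Require Import Defs.
From HB Require Import structures.
From mathcomp Require Import all_boot all_order all_algebra.
From mathcomp Require Import finmap.
From mathcomp Require Import complex.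
From mathcomp Require Import reals.
From mathcomp Require Import ring lra.
Import Order.TTheory GRing.Theory Num.Theory.
Set Implicit Arguments. Unset Strict Implicit. Unset Printing Implicit Defensive.
Local Open Scope fset_scope.

Section FP.
Variables (K : choiceType) (Rt : Type) (idx : Rt) (op : Monoid.com_law idx).

Lemma fpow_disjU (A B : {fset K}) (F : {fset K} -> Rt) : [disjoint A & B] ->
  \big[op/idx]_(Z <- fpowerset (A `|` B)) F Z =
  \big[op/idx]_(X <- fpowerset A) \big[op/idx]_(Y <- fpowerset B) F (X `|` Y).
Proof.
move=> dAB.
have -> := (@pair_big_dep_cond _ _ op _ _ (fpowerset A) (fun _ => fpowerset B) xpredT (fun _ => xpredT) (fun X Y => F (X `|` Y))).
set P := [fset _ | _ in _, _ in _].
have inP : forall X Y, (X, Y) \in P = (X `<=` A) && (Y `<=` B).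
  move=> X Y; apply/imfset2P/andP => /=.
    case=> X' hX [Y' hY] [-> ->]; move: hX hY; by rewrite !inE /= !fpowersetE !andbT => -> ->.
  by case=> XA YB; exists X; rewrite ?inE /= ?fpowersetE ?andbT //; exists Y; rewrite ?inE /= ?fpowersetE ?andbT.
have -> : fpowerset (A `|` B) = [fset p.1 `|` p.2 | p in P].
  apply/fsetP => Z; rewrite fpowersetE; apply/idP/imfsetP => /=.
  - move=> ZAB; exists (Z `&` A, Z `&` B).
      by rewrite inP !fsubsetIr.
    by rewrite /= -fsetIUr; apply/esym/fsetIidPl.
  - case=> -[X Y]; rewrite inP => /andP [XA YB] -> /=.
    by apply: fsetUSS.
rewrite big_imfset //=.
move=> [X Y] [X' Y']; rewrite /= !inP => /andP[XA YB] /andP[X'A Y'B] E.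
have dXY : forall X Y, X `<=` A -> Y `<=` B -> (X `|` Y) `&` A = X.
  move=> U V UA VB; rewrite fsetIUl (elimT (@fsetIidPl _ _ _) UA).
  have -> : V `&` A = fset0.
    apply/eqP; rewrite -fsubset0; apply/fsubsetP => v; rewrite !inE => /andP[vV vA].
    move/fdisjointP: dAB => /(_ v vA); by rewrite (fsubsetP VB).
  by rewrite fsetU0.
have dXY' : forall X Y, X `<=` A -> Y `<=` B -> (X `|` Y) `&` B = Y.
  move=> U V UA VB; rewrite fsetIUl (elimT (@fsetIidPl _ _ _) VB).
  have -> : U `&` B = fset0.
    apply/eqP; rewrite -fsubset0; apply/fsubsetP => v; rewrite !inE => /andP[vV vA].
    move/fdisjointP: dAB => /(_ v (fsubsetP UA v vV)); by rewrite vA.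
  by rewrite fset0U.
congr (_, _).
  by rewrite -(dXY _ _ XA YB) E dXY.
by rewrite -(dXY' _ _ XA YB) E dXY'.
Qed.
End FP.

Lemma fpowU1 (K : choiceType) (Rt : Type) (idx : Rt) (op : Monoid.com_law idx)
  (a : K) (A : {fset K}) (F : {fset K} -> Rt) : a \notin A ->
  \big[op/idx]_(Z <- fpowerset (a |` A)) F Z =
  \big[op/idx]_(X <- fpowerset A) op (F X) (F (a |` X)).
Proof.
move=> aA; rewrite fsetUC fpow_disjU; last first.
  by apply/fdisjointP => z zA; rewrite inE; apply: contraNneq aA => <-.
apply: eq_fbigr => X _ _; rewrite fpowerset1 big_fsetU1 ?big_seq_fset1.
  by rewrite fsetU0 fsetUC.
by rewrite inE eq_sym; apply/eqP => /fsetP /(_ a); rewrite !inE eqxx.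
Qed.

Lemma big_fsetU_disj (K : choiceType) (Rt : Type) (idx : Rt) (op : Monoid.com_law idx)
  (A B : {fset K}) (F : K -> Rt) : [disjoint A & B] ->
  \big[op/idx]_(z <- A `|` B) F z = op (\big[op/idx]_(z <- A) F z) (\big[op/idx]_(z <- B) F z).
Proof.
move=> dAB; rewrite (big_fsetID _ (mem A)); congr (op _ _); apply: eq_fbigl => z; rewrite !inE /=.
  by case: (z \in A); rewrite ?orbT ?andbF.
case zA: (z \in A) => /=; rewrite ?andbT //.
by move/fdisjointP: dAB => /(_ z zA) /negbTE ->.
Qed.

Section Max.
Variable R : realDomainType.
Local Open Scope ring_scope.
Lemma bigmax_init (I : Type) (s : seq I) (P : pred I) (F : I -> R) (i : R) :
  i <= \big[Num.max/i]_(y <- s | P y) F y.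
Proof.
elim: s => [|y s IH]; rewrite ?big_nil ?big_cons //.
by case: (P y) => //; rewrite le_max IH orbT.
Qed.
Lemma bigmax_term (I : eqType) (s : seq I) (P : pred I) (F : I -> R) (i : R) x :
  x \in s -> P x -> F x <= \big[Num.max/i]_(y <- s | P y) F y.
Proof.
elim: s => [|y s IH] //; rewrite inE big_cons => /orP [/eqP <-|xs] Px.
  by rewrite Px le_max lexx.
by case: (P y); rewrite ?le_max IH ?orbT.
Qed.
Lemma bigmax_le (I : eqType) (s : seq I) (P : pred I) (F : I -> R) (i B : R) :
  i <= B -> (forall y, y \in s -> P y -> F y <= B) -> \big[Num.max/i]_(y <- s | P y) F y <= B.
Proof.
move=> iB; elim: s => [|y s IH] FB; rewrite ?big_nil ?big_cons //.
case Py: (P y) => //; rewrite ?ge_max ?FB ?inE ?eqxx ?IH //.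
  by move=> z zs; apply: FB; rewrite inE zs orbT.
by move=> z zs; apply: FB; rewrite inE zs orbT.
Qed.
End Max.

Section Cmod.
Variable R : realType.
Local Open Scope ring_scope.
Lemma cmodM (a b : R[i]) : cmod (a * b) = cmod a * cmod b.
Proof. exact: ComplexField.Normc.normcM. Qed.
Lemma cmodD (a b : R[i]) : cmod (a + b) <= cmod a + cmod b.
Proof. exact: (@le_normcD R a b). Qed.
Lemma cmodN (a : R[i]) : cmod (- a) = cmod a.
Proof. exact: (@normcN R a). Qed.
Lemma cmod_ge0 (a : R[i]) : 0 <= cmod a.
Proof. by case: a => u v; rewrite /cmod /= sqrtr_ge0. Qed.
Lemma cmod1 : cmod (1 : R[i]) = 1.
Proof. exact: ComplexField.Normc.normc1. Qed.
Lemma cmod0 : cmod (0 : R[i]) = 0.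
Proof. exact: ComplexField.Normc.normc0. Qed.
Lemma cmodX1 n : cmod ((-1 : R[i]) ^+ n) = 1.
Proof.
elim: n => [|n IH]; first by rewrite expr0 cmod1.
by rewrite exprS cmodM cmodN cmod1 mul1r.
Qed.
Lemma cmod_prod (I : Type) (s : seq I) (g : I -> R[i]) :
  cmod (\prod_(i <- s) g i) = \prod_(i <- s) cmod (g i).
Proof.
elim: s => [|y s IH]; rewrite ?big_nil ?big_cons ?cmod1 //.
by rewrite cmodM IH.
Qed.
Lemma cmod_sum (I : Type) (s : seq I) (g : I -> R[i]) :
  cmod (\sum_(i <- s) g i) <= \sum_(i <- s) cmod (g i).
Proof.
elim: s => [|y s IH]; rewrite ?big_nil ?big_cons ?cmod0 //.
by apply: le_trans (cmodD _ _) _; rewrite lerD2l.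
Qed.

Lemma prod_bound (I : Type) (s : seq I) (g : I -> R[i]) (b : I -> R) (be : R) :
  0 <= be ->
  (forall i, cmod (g i) <= b i /\ 1 + cmod (g i - 1) * be <= b i) ->
  cmod (\prod_(i <- s) g i) <= \prod_(i <- s) b i /\
  1 + cmod (\prod_(i <- s) g i - 1) * be <= \prod_(i <- s) b i.
Proof.
move=> be0 hb; elim: s => [|y s [IH1 IH2]].
  by rewrite !big_nil cmod1 subrr cmod0 mul0r addr0.
rewrite !big_cons; move: IH1 IH2; set P := \prod_(i <- s) g i; set B := \prod_(i <- s) b i; move=> IH1 IH2.
have [h1 h2] := hb y.
have P0 := cmod_ge0 P; have g0 := cmod_ge0 (g y - 1); have g1 := cmod_ge0 (g y).
have B0 : 0 <= B by apply: le_trans IH1.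
split.
  by rewrite cmodM; apply: ler_pM => //.
have E : g y * P - 1 = (g y - 1) * P + (P - 1) by ring.
rewrite E.
have := cmodD ((g y - 1) * P) (P - 1); rewrite cmodM => hD.
have hP0 := cmod_ge0 (P - 1).
set u := cmod (g y - 1) * be.
have u0 : 0 <= u by rewrite mulr_ge0.
have hu : 1 + u <= b y by [].
apply: (@le_trans _ _ (1 + cmod (P - 1) * be + u * cmod P)).
  have := ler_wpM2r be0 hD.
  rewrite /u; move=> h; rewrite -[X in _ <= X]addrA lerD2l. 
  apply: le_trans h _; rewrite mulrDl; lra.
have h3 := ler_wpM2l u0 IH1.
have h4 := ler_wpM2r B0 hu.
rewrite mulrDl mul1r in h4.
clearbody u P B. lra.
Qed.
End Cmod.

Section Main.
Variables (R : realType) (T : countType) (al : T -> R).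
Hypothesis hal : forall t, (0 <= al t)%R.
Local Open Scope ring_scope.
Definition aS (S : {fset T}) : R := \prod_(s <- S) al s.
Definition Kf (f : {fset T} -> R[i]) (M : {fset T}) : R[i] := \prod_(C <- fpowerset M) f C.
Definition Gf f (N : {fset T}) : R[i] := \sum_(M <- fpowerset N) (-1) ^+ #|` N `\` M| * Kf f M.
Definition mf (f : {fset T} -> R[i]) C : R :=
  \big[Num.max/cmod (f C)]_(S <- fpowerset C | S != fset0) (1 + cmod (f C - 1) * aS S).
Definition LHSf f L := \sum_(N <- fpowerset L) cmod (Gf f N) * aS N.
Definition RHSf f L := \prod_(C <- fpowerset L) mf f C.

Lemma aS_ge0 S : 0 <= aS S.
Proof. by apply: prodr_ge0 => t _; apply: hal. Qed.
Lemma aS_disj A B : [disjoint A & B] -> aS (A `|` B) = aS A * aS B.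
Proof. by move=> d; rewrite /aS big_fsetU_disj. Qed.
Lemma aS0 : aS fset0 = 1.
Proof. by rewrite /aS big_seq_fset0. Qed.
Lemma mf_cmod f C : cmod (f C) <= mf f C.
Proof. exact: bigmax_init. Qed.
Lemma mf_ge0 f C : 0 <= mf f C.
Proof. apply: le_trans (mf_cmod f C); exact: cmod_ge0. Qed.
Lemma mf_term f C S : S `<=` C -> S != fset0 -> 1 + cmod (f C - 1) * aS S <= mf f C.
Proof.
move=> SC S0; rewrite /mf; apply: (@bigmax_term _ _ _ (fun S => S != fset0) (fun S => 1 + cmod (f C - 1) * aS S) _ S) => //.
by rewrite fpowersetE.
Qed.
Lemma mf0 f : mf f fset0 = cmod (f fset0).
Proof.
apply/le_anti; rewrite mf_cmod andbT; apply: bigmax_le => // S.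
by rewrite fpowersetE fsubset0 => ->.
Qed.
Lemma mf_one f C : f C = 1 -> mf f C = 1.
Proof.
move=> fC; apply/le_anti; rewrite -{2}cmod1 -fC mf_cmod andbT.
apply: bigmax_le => [|S _ _]; rewrite fC ?cmod1 //.
by rewrite subrr cmod0 mul0r addr0.
Qed.
Lemma RHS_ge0 f L : 0 <= RHSf f L.
Proof. by apply: prodr_ge0 => C _; apply: mf_ge0. Qed.

Lemma fsetDU1 (a : T) (N M : {fset T}) : a \notin N -> M `<=` N ->
  (a |` N) `\` M = a |` (N `\` M).
Proof.
move=> aN MN; apply/fsetP => z; rewrite !inE.
case: (z =P a) => [->|] //=.
by have -> : (a \in M) = false by apply/negbTE; apply: contra aN; apply: (fsubsetP MN).
Qed.
Lemma fsetDU1U1 (a : T) (N M : {fset T}) : a \notin N -> 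
  (a |` N) `\` (a |` M) = N `\` M.
Proof.
move=> aN; apply/fsetP => z; rewrite !inE.
case: (z =P a) => [->|] //=; by rewrite (negbTE aN) andbF.
Qed.

Lemma alt_sum (N : {fset T}) :
  \sum_(M <- fpowerset N) (-1) ^+ #|` N `\` M| = (N == fset0)%:R :> R[i].
Proof.
have [->|/fset0Pn [a aN]] := eqVneq N fset0.
  by rewrite fpowerset0 big_seq_fset1 fsetD0 cardfs0 expr0.
rewrite -(fsetD1K aN); set N0 := N `\ a.
have aN0 : a \notin N0 by rewrite !inE eqxx.
rewrite fpowU1 //.
rewrite big1_fset // => M; rewrite fpowersetE => MN _ /=.
rewrite fsetDU1 // fsetDU1U1 // cardfsU1.
have -> : a \notin N0 `\` M by rewrite inE negb_and aN0 orbT.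
by rewrite add1n exprS mulN1r addNr.
Qed.

Lemma Gf_scale f N : Gf f N = f fset0 * Gf (fun C => if C == fset0 then 1 else f C) N.
Proof.
rewrite /Gf mulr_sumr; apply: eq_fbigr => M _ _.
rewrite mulrCA; congr (_ * _).
rewrite /Kf (big_fsetD1 fset0) ?fpowersetE ?fsub0set // [in RHS](big_fsetD1 fset0) ?fpowersetE ?fsub0set //.
rewrite (eqxx (@fset0 T)) /= mul1r; congr (_ * _); apply: eq_fbigr => C; rewrite !inE => /andP[/negbTE -> _] _ //.
Qed.

End Main.

Section Main2.
Variables (R : realType) (T : countType) (al : T -> R).
Hypothesis hal : forall t, (0 <= al t)%R.
Local Open Scope ring_scope.
Notation aS := (aS al).
Notation mf := (mf al).
Notation LHSf := (LHSf al).
Notation RHSf := (RHSf al).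

Definition upd (f : {fset T} -> R[i]) (D : {fset T}) := fun C => if C == D then 1 else f C.
Definition Hf (f : {fset T} -> R[i]) (D N : {fset T}) : R[i] :=
  \sum_(M <- fpowerset N) (-1) ^+ #|` N `\` M| * ((D `<=` M)%:R * Kf f M).
Definition fpp (f : {fset T} -> R[i]) (D : {fset T}) := fun C => \prod_(E <- fpowerset D) f (C `|` E).

Lemma Kf_split f D M : Kf f M = Kf (upd f D) M * (1 + (f D - 1) * (D `<=` M)%:R).
Proof.
case DM: (D `<=` M).
  rewrite /Kf (big_fsetD1 D) ?fpowersetE // [X in _ = X * _](big_fsetD1 D) ?fpowersetE //=.
  rewrite /upd eqxx mul1r mulr1.
  rewrite [1 + _]addrC subrK mulrC; congr (_ * _).
  by apply: eq_fbigr => C; rewrite !inE => /andP [/negbTE -> _].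
rewrite mulr0 addr0 mulr1 /Kf; apply: eq_fbigr => C; rewrite fpowersetE /upd => CM _.
by case: eqP => // E; move: DM; rewrite -E CM.
Qed.

Lemma Gf_split f D N : Gf f N = Gf (upd f D) N + (f D - 1) * Hf (upd f D) D N.
Proof.
rewrite /Gf /Hf mulr_sumr -big_split; apply: eq_fbigr => M _ _ /=.
rewrite (Kf_split f D); ring.
Qed.

Lemma LHS_split f D L : LHSf f L <= LHSf (upd f D) L +
   cmod (f D - 1) * \sum_(N <- fpowerset L) cmod (Hf (upd f D) D N) * aS N.
Proof.
rewrite /LHSf mulr_sumr -big_split /=; apply: ler_sum => N _.
rewrite (Gf_split f D) mulrA -mulrDl; apply: ler_wpM2r; first exact: aS_ge0.
by apply: le_trans (cmodD _ _) _; rewrite cmodM.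
Qed.

Lemma disj_sub (A B C : {fset T}) : [disjoint A & B] -> C `<=` A -> [disjoint C & B].
Proof.
move=> /fdisjointP dAB CA; apply/fdisjointP => z zC; exact: dAB (fsubsetP CA z zC).
Qed.

Lemma H_zero f D N E : [disjoint N & D] -> E `<=` D -> E != D -> Hf f D (N `|` E) = 0.
Proof.
move=> dND ED EnD; rewrite /Hf big1_fset // => M; rewrite fpowersetE => MNE _.
suff -> : (D `<=` M) = false by rewrite mul0r mulr0.
apply/negbTE; apply: contra EnD => DM; rewrite eqEfsubset ED /=.
apply/fsubsetP => d dD; have := fsubsetP MNE d (fsubsetP DM d dD).
rewrite inE => /orP [dN|//].
by move/fdisjointP: dND => /(_ d dN); rewrite dD.
Qed.

Lemma H_D f D N : [disjoint N & D] -> Hf f D (N `|` D) = Gf (fpp f D) N.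
Proof.
move=> dND; rewrite /Hf fpow_disjU //; apply: eq_fbigr => M1; rewrite fpowersetE => M1N _.
have dM1 : [disjoint M1 & D] by apply: disj_sub dND M1N.
rewrite (big_fsetD1 D) ?fpowersetE ?fsubset_refl //= big1_fset ?addr0; last first.
  move=> E; rewrite !inE fpowersetE => /andP [EnD ED] _.
  suff -> : (D `<=` M1 `|` E) = false by rewrite mul0r mulr0.
  apply/negbTE; apply: contra EnD => DM; rewrite eqEfsubset ED /=.
  apply/fsubsetP => d dD; have := fsubsetP DM d dD.
  rewrite inE => /orP [dM|//].
  by move/fdisjointP: dM1 => /(_ d dM); rewrite dD.
rewrite fsubsetUr mul1r.
have -> : (N `|` D) `\` (M1 `|` D) = N `\` M1.
  apply/fsetP => z; rewrite !inE.
  case zD: (z \in D); rewrite ?orbT ?andbF ?orbF //=.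
  have zN : z \notin N by apply: contraTN zD => zN; move/fdisjointP: dND => /(_ z zN).
  by rewrite (negbTE zN) andbF.
by rewrite /Kf fpow_disjU.
Qed.

Lemma fsetDUK (D L : {fset T}) : D `<=` L -> (L `\` D) `|` D = L.
Proof.
move=> DL; apply/fsetP => z; rewrite !inE.
by case zD: (z \in D); rewrite ?orbT ?orbF ?andbT //= (fsubsetP DL z zD).
Qed.

Lemma disjD (D L : {fset T}) : [disjoint L `\` D & D].
Proof. by apply/fdisjointP => z; rewrite !inE => /andP [].  Qed.

Lemma H_sum f D L : D `<=` L ->
  \sum_(N <- fpowerset L) cmod (Hf f D N) * aS N = aS D * LHSf (fpp f D) (L `\` D).
Proof.
move=> DL; rewrite -{1}(fsetDUK DL) fpow_disjU ?disjD //.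
rewrite /LHSf mulr_sumr; apply: eq_fbigr => N; rewrite fpowersetE => NL _.
have dND : [disjoint N & D] by apply: disj_sub (disjD D L) NL.
rewrite (big_fsetD1 D) ?fpowersetE ?fsubset_refl //= big1_fset ?addr0; last first.
  move=> E; rewrite !inE fpowersetE => /andP [EnD ED] _.
  by rewrite H_zero // cmod0 mul0r.
rewrite (H_D _ dND). rewrite (aS_disj _ dND). ring.
Qed.

Lemma mf_fpp f D C : mf (fpp f D) C <= \prod_(E <- fpowerset D) mf f (C `|` E).
Proof.
rewrite /mf; apply: bigmax_le.
  rewrite /fpp cmod_prod; apply: ler_prod => E _; rewrite cmod_ge0 /=.
  exact: mf_cmod.
move=> S; rewrite fpowersetE => SC S0.
have := @prod_bound R _ (fpowerset D) (fun E => f (C `|` E)) (fun E => mf f (C `|` E)) (aS S) (aS_ge0 hal S).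
case.
  move=> E; split; first exact: mf_cmod.
  apply: mf_term => //; apply: fsubset_trans SC _; exact: fsubsetUl.
by move=> _ ->.
Qed.
End Main2.

Section Main3.
Variables (R : realType) (T : countType) (al : T -> R).
Hypothesis hal : forall t, (0 <= al t)%R.
Local Open Scope ring_scope.
Notation aS := (aS al).
Notation mf := (mf al).
Notation LHSf := (LHSf al).
Notation RHSf := (RHSf al).

Definition cnt (f : {fset T} -> R[i]) (L : {fset T}) :=
  #|` [fset C in fpowerset L | (C != fset0) && (f C != 1)] |.

Lemma RHS_fpp f D L : D `<=` L -> RHSf (fpp f D) (L `\` D) <= RHSf f L.
Proof.
move=> DL; apply: (@le_trans _ _ (\prod_(C <- fpowerset (L `\` D)) \prod_(E <- fpowerset D) mf f (C `|` E))).
  rewrite /RHSf big_seq [X in _ <= X]big_seq; apply: ler_prod => C _.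
  by rewrite mf_ge0 // mf_fpp.
by rewrite /RHSf -fpow_disjU ?disjD // fsetDUK.
Qed.

Lemma RHS_upd f D L : D `<=` L -> D != fset0 ->
  RHSf (upd f D) L = \prod_(C <- fpowerset L `\ D) mf f C /\
  RHSf f L = mf f D * \prod_(C <- fpowerset L `\ D) mf f C.
Proof.
move=> DL D0; rewrite /RHSf; split; last by rewrite (big_fsetD1 D) ?fpowersetE.
rewrite (big_fsetD1 D) ?fpowersetE //.
rewrite (@mf_one _ _ _ (upd f D) D); last by rewrite /upd eqxx.
rewrite Monoid.mul1m; apply: eq_fbigr => C; rewrite !inE => /andP [CD _] _.
by rewrite /mf /upd (negbTE CD).
Qed.

Lemma step_k L (IHL : forall L' f, (#|` L'| < #|` L|)%N -> LHSf f L' <= RHSf f L') :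
  forall k f, f fset0 = 1 -> cnt f L = k -> LHSf f L <= RHSf f L.
Proof.
elim=> [|k IHk] f f0 ck.
  have hf : forall C, C `<=` L -> f C = 1.
    move=> C CL; have [->//|C0] := eqVneq C fset0.
    move/cardfs0_eq: ck => /fsetP /(_ C); rewrite !inE /= fpowersetE CL C0 /=.
    by move/negbT; rewrite negbK => /eqP.
  have hG : forall N, N `<=` L -> Gf f N = (N == fset0)%:R.
    move=> N NL; rewrite /Gf -alt_sum; apply: eq_fbigr => M; rewrite fpowersetE => MN _.
    rewrite /Kf big1_fset ?mulr1 // => C; rewrite fpowersetE => CM _.
    by apply: hf; apply: fsubset_trans CM (fsubset_trans MN NL).
  have -> : LHSf f L = 1.
    rewrite /LHSf (big_fsetD1 fset0) ?fpowersetE ?fsub0set //= big1_fset ?addr0.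
      by rewrite hG ?fsub0set // eqxx cmod1 mul1r aS0.
    move=> N; rewrite !inE fpowersetE => /andP [N0 NL] _.
    by rewrite hG // (negbTE N0) cmod0 mul0r.
  rewrite /RHSf big_seq; apply: (big_ind (fun x => 1 <= x)) => //.
    by move=> x y; apply: mulr_ege1.
  move=> C; rewrite fpowersetE => CL; rewrite -(cmod1 R) -(hf C CL); exact: mf_cmod.
have : (0 < cnt f L)%N by rewrite ck.
rewrite cardfs_gt0 => /fset0Pn [D]; rewrite !inE /= fpowersetE => /andP [DL /andP [D0 fD]].
pose f' := upd f D.
have f'0 : f' fset0 = 1 by rewrite /f' /upd eq_sym (negbTE D0).
have ck' : cnt f' L = k.
  move: ck; rewrite /cnt (cardfsD1 D) !inE /= fpowersetE DL D0 fD /= add1n => -[<-].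
  congr (#|` _|); apply/fsetP => C; rewrite !inE /= /f' /upd.
  by case: (C =P D) => [->|]; rewrite ?eqxx ?andbF.
have hDL : (#|` L `\` D| < #|` L|)%N.
  have := cardfsU (L `\` D) D; rewrite fsetDUK // => ->.
  have -> : (L `\` D) `&` D = fset0.
    by apply/eqP; rewrite -fsubset0; apply/fsubsetP => z; rewrite !inE => /andP [/andP [/negP zD _] /zD].
  by rewrite cardfs0 subn0 -[X in (X < _)%N]addn0 ltn_add2l cardfs_gt0.
have := IHL (L `\` D) (fpp f' D) hDL.
have := IHk f' f'0 ck'.
have [RU RF] := RHS_upd f DL D0.
have := RHS_fpp f' DL.
rewrite RU RF.
have := LHS_split hal f D L.
rewrite (H_sum _ _ DL) -/f'.
set P0 := \prod_(C <- _ `\ D) mf f C.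
set c := cmod (f D - 1).
have P00 : 0 <= P0 by apply: prodr_ge0 => C _; apply: mf_ge0.
have c0 : 0 <= c by apply: cmod_ge0.
have aD0 := aS_ge0 hal D.
have hm : 1 + c * aS D <= mf f D by apply: mf_term => //; apply: fsubset_refl.
move=> h1 h2 h3 h4.
have h5 := le_trans h4 h2.
have h6 : c * (aS D * LHSf (fpp f' D) (L `\` D)) <= c * (aS D * P0).
  by apply: ler_wpM2l => //; apply: ler_wpM2l.
have h7 := ler_wpM2r P00 hm.
rewrite mulrDl mul1r in h7.
rewrite mulrA in h6 h7.
lra.
Qed.

Lemma main_gen L (IHL : forall L' f, (#|` L'| < #|` L|)%N -> LHSf f L' <= RHSf f L') f :
  LHSf f L <= RHSf f L.
Proof.
pose f1 := fun C => if C == fset0 then 1 else f C.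
have f10 : f1 fset0 = 1 by rewrite /f1 eqxx.
have := step_k IHL f10 (erefl (cnt f1 L)).
have -> : LHSf f L = cmod (f fset0) * LHSf f1 L.
  rewrite /LHSf mulr_sumr; apply: eq_fbigr => N _ _.
  by rewrite Gf_scale cmodM mulrA.
have -> : RHSf f L = cmod (f fset0) * RHSf f1 L.
  rewrite /RHSf (big_fsetD1 fset0) ?fpowersetE ?fsub0set //.
  rewrite [X in _ = _ * X](big_fsetD1 fset0) ?fpowersetE ?fsub0set //.
  rewrite !mf0 f10 cmod1 Monoid.mul1m.
  congr (_ * _); apply: eq_fbigr => C; rewrite !inE => /andP [C0 _] _.
  by rewrite /mf /f1 (negbTE C0).
by move=> h; apply: ler_wpM2l => //; apply: cmod_ge0.
Qed.

Lemma main L f : LHSf f L <= RHSf f L.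
Proof.
move: {2}(#|` L|) (leqnn #|` L|) => n; elim: n L f => [|n IH] L f hL.
  by apply: main_gen => L' f' h; move: hL; rewrite leqn0 => /eqP E; rewrite E in h.
apply: main_gen => L' f' h; apply: IH.
by rewrite -ltnS; apply: leq_trans h hL.
Qed.
End Main3.

Section Final.
Variables (R : realType) (T : countType) (W : {fset T} -> R[i]).
Local Open Scope ring_scope.

Lemma kappa_gen x M : kappa W [fset x] M = condW W [fset x] M.
Proof.
rewrite /kappa fpowerset1 big_mkcond big_fsetU1 /=; last first.
  rewrite inE; apply/negP => /eqP /fsetP /(_ x); by rewrite !inE eqxx.
rewrite mul1r big_seq_fset1.
have -> : ([fset x] != fset0) by apply/fset0Pn; exists x; rewrite inE.
by [].
Qed.

Lemma kappa_notin x M : x \notin M -> kappa W [fset x] M = \prod_(C <- fpowerset M) W (x |` C).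
Proof.
move=> xM; rewrite kappa_gen /condW.
have -> : [fset x] `&` M == fset0.
  apply/eqP/fsetP => z; rewrite !inE; case: (z =P x) => // ->; by rewrite (negbTE xM).
by [].
Qed.

Lemma kappa_in x M : x \in M -> kappa W [fset x] M = 0.
Proof.
move=> xM; rewrite kappa_gen /condW.
have -> : ([fset x] `&` M == fset0) = false.
  apply/negbTE/fset0Pn; exists x; by rewrite !inE eqxx xM.
have -> : has (fun y => [fset x] == [fset y]) M by apply/hasP; exists x.
by [].
Qed.

Lemma gamma_eq x N : x \notin N -> gamma W x N = Gf (fun C => W (x |` C)) N.
Proof.
move=> xN; rewrite /gamma /gammaB /Gf; apply: eq_fbigr => M; rewrite fpowersetE => MN _.
rewrite fset0U kappa_notin //; apply: contra xN; exact: (fsubsetP MN).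
Qed.

Lemma gamma_U1 x N : x \notin N -> gamma W x (x |` N) = - gamma W x N.
Proof.
move=> xN; rewrite /gamma /gammaB fpowU1 // -sumrN; apply: eq_fbigr => M; rewrite fpowersetE => MN _ /=.
rewrite !fset0U (kappa_in (x := x) (M := x |` M)) ?inE ?eqxx // mulr0 addr0.
rewrite fsetDU1 // cardfsU1.
have -> : x \notin N `\` M by rewrite inE negb_and xN orbT.
by rewrite add1n exprS mulN1r mulNr.
Qed.
End Final.

Unset Implicit Arguments.
Local Open Scope ring_scope.
Local Open Scope fset_scope.

Theorem corollary6p5 (R : realType) (T : countType) (W : {fset T} -> R[i])
    (r : T -> R) (hr : forall t, 0 <= r t < 1) (Lam : {fset T}) (x : T) :
  \sum_(N <- fpowerset Lam) cmod (gamma W x N) * alphaS r N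
    = (1 + alpha r x * (x \in Lam)%:R)
      * \sum_(N <- fpowerset (Lam `\ x)) cmod (gamma W x N) * alphaS r N
  /\
  \sum_(N <- fpowerset (Lam `\ x)) cmod (gamma W x N) * alphaS r N
    <= \prod_(X <- fpowerset (x |` Lam) | x \in X)
         \big[Num.max/cmod (W X)]_(S <- fpowerset (X `\ x) | S != fset0)
            (1 + cmod (W X - 1) * alphaS r S).
Proof.
have hal : forall t, (0 <= alpha r t)%R.
  move=> t; have /andP [h0 h1] := hr t; rewrite /alpha divr_ge0 // subr_ge0 ltW //.
have xLx : x \notin Lam `\ x by rewrite !inE eqxx.
split.
  case xL: (x \in Lam).
    rewrite -{1}(fsetD1K xL) fpowU1 // mulr1 mulrDl mul1r mulr_sumr -big_split /=.
    apply: eq_fbigr => N; rewrite fpowersetE => NL _.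
    have xN : x \notin N by apply: contra xLx; exact: (fsubsetP NL).
    rewrite gamma_U1 // cmodN /alphaS big_fsetU1 //=.
    by rewrite mulrCA.
  by rewrite mulr0 addr0 mul1r mem_fsetD1 ?xL.
have := main hal (Lam `\ x) (fun C => W (x |` C)).
have -> : LHSf (alpha r) (fun C => W (x |` C)) (Lam `\ x) =
    \sum_(N <- fpowerset (Lam `\ x)) cmod (gamma W x N) * alphaS r N.
  rewrite /LHSf; apply: eq_fbigr => N; rewrite fpowersetE => NL _.
  have xN : x \notin N by apply: contra xLx; exact: (fsubsetP NL).
  by rewrite gamma_eq.
move=> h; apply: le_trans h _; rewrite le_eqVlt; apply/orP; left; apply/eqP.
have -> : x |` Lam = x |` (Lam `\ x).
  apply/fsetP => z; rewrite !inE; by case: (z =P x).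
rewrite big_mkcond fpowU1 //= /RHSf; apply: eq_fbigr => C; rewrite fpowersetE => CL _.
have xC : x \notin C by apply: contra xLx; exact: (fsubsetP CL).
rewrite (negbTE xC) mul1r fset1U1 fsetU1K //.
Qed.
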